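(* Let $\mathbf P$ be the edge-probability matrix of a directed stochastic block model with $K_n$ communities, community-probability vector $\boldsymbol\rho$ with $\rho_{\min}=\min_k\rho_k>0$, block matrix $\mathbf B$ with pairwise distinct rows, and sparsity factor $\gamma_n$. Let $E_{\min}=n\rho_{\min}/2$ and $L_n=2\exp\big\{-\frac{\frac12(\frac{\rho_{\min}}2)^2n}{1+\frac13(\frac{\rho_{\min}}2)}\big\}$. Then $$\mathbb P\left(d_{\mathbf P}^*>\gamma_n\sqrt{E_{\min}}\,d_{\mathbf B}^*\right)\ge1-\binom{K_n}{2}K_nL_n.$$ Moreover, if $\frac{n\rho_{\min}^2}{8(1+\frac16\rho_{\min})}-\log\big(K_n^2(K_n-1)\big)\to\infty$ as $n\to\infty$, then this lower bound converges to $1$.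
   Context: Model: nodes $[n]$; labels $Z_1,\dots,Z_n$ i.i.d. Categorical$(\boldsymbol\rho)$ on $[K_n]$, $\pi(i)=Z_i$; $\mathbf B\in[0,1]^{K_n\times K_n}$; $\gamma_n\in(0,1]$; $P_{ij}=\gamma_nB_{\pi(i)\pi(j)}$ for all $i,j\in[n]$ (including $i=j$). $d_{\mathbf B}^*=\min_{a\ne b}\|\mathbf B_{a\cdot}-\mathbf B_{b\cdot}\|_2$ and $d_{\mathbf P}^*=\min\{\|\mathbf P_{i\cdot}-\mathbf P_{j\cdot}\|_2: i,j\in[n],\ \pi(i)\ne\pi(j)\}$. $\boldsymbol\rho$, $K_n$, $\mathbf B$, $\gamma_n$ may depend on $n$. *)

(* Defs.v *)
From HB Require Import structures.
From mathcomp Require Import all_boot all_order all_algebra.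
From mathcomp Require Import all_classical all_reals all_analysis.
Set Implicit Arguments. Unset Strict Implicit. Unset Printing Implicit Defensive.
Import Order.TTheory GRing.Theory Num.Theory.
Local Open Scope ring_scope.

Section SBM.
Variable R : realType.

Definition rho_min (K : nat) (rho : 'I_K -> R) : R :=
  fine (\big[mine/+oo%E]_(k < K) (rho k)%:E).

Definition Pmat (n K : nat) (gamma : R) (B : 'M[R]_K) (z : {ffun 'I_n -> 'I_K})
  (i j : 'I_n) : R := gamma * B (z i) (z j).

Definition rowdistP (n K : nat) (gamma : R) (B : 'M[R]_K) (z : {ffun 'I_n -> 'I_K})
  (i j : 'I_n) : R :=
  Num.sqrt (\sum_(l < n) (Pmat gamma B z i l - Pmat gamma B z j l) ^+ 2).

Definition dPstar (n K : nat) (gamma : R) (B : 'M[R]_K) (z : {ffun 'I_n -> 'I_K})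
  : \bar R :=
  \big[mine/+oo%E]_(ij : 'I_n * 'I_n | z ij.1 != z ij.2)
     (rowdistP gamma B z ij.1 ij.2)%:E.

Definition dBstar (K : nat) (B : 'M[R]_K) : \bar R :=
  \big[mine/+oo%E]_(ab : 'I_K * 'I_K | ab.1 != ab.2)
     (Num.sqrt (\sum_(k < K) (B ab.1 k - B ab.2 k) ^+ 2))%:E.

(* Probability of an event on the labels, when Z_1..Z_n are i.i.d. Categorical(rho):
   the joint law of (Z_1,...,Z_n) on [K]^n is the product law. *)
Definition label_prob (n K : nat) (rho : 'I_K -> R) (E : pred {ffun 'I_n -> 'I_K}) : R :=
  \sum_(z : {ffun 'I_n -> 'I_K} | E z) \prod_(i < n) rho (z i).

Definition Emin (n : nat) (rmin : R) : R := n%:R * rmin / 2.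

Definition Ln (n : nat) (rmin : R) : R :=
  2 * expR (- ((1 / 2) * (rmin / 2) ^+ 2 * n%:R / (1 + (1 / 3) * (rmin / 2)))).

Definition lower_bound (n K : nat) (rmin : R) : R :=
  1 - 'C(K, 2)%:R * K%:R * Ln n rmin.

End SBM.

(* Main.v *)
Require Import Defs.
From HB Require Import structures.
From mathcomp Require Import all_boot all_order all_algebra.
From mathcomp Require Import all_classical all_reals all_analysis.
From mathcomp Require Import lra ring.
Import Order.TTheory GRing.Theory Num.Theory.
Import numFieldNormedType.Exports.
Local Open Scope classical_set_scope.
Local Open Scope ring_scope.

Set Implicit Arguments. Unset Strict Implicit. Unset Printing Implicit Defensive.
Section Helpers.
Variable R : realType.

Lemma expR_ge2 (x : R) : 0 <= x -> 1 + x + x^+2/2 <= expR x.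
Proof.
move=> x0; rewrite /expR.
apply: le_trans (nondecreasing_cvgn_le _ (is_cvg_series_exp_coeff x) 3).
- rewrite /series /= !big_nat_recr //= big_nil /exp_coeff /=.
  rewrite !factS fact0 /=. rewrite expr0 expr1 !divr1 add0r. by [].
- apply: nondecreasing_series => n _; rewrite /exp_coeff /= divr_ge0 // exprn_ge0 //.
Qed.

Lemma expRN_le (x : R) : 0 <= x -> expR (- x) <= 1 - x + x^+2/2.
Proof.
move=> x0; have hA := @expR_ge2 x x0.
have A0 : 0 < 1 + x + x^+2/2.
  have : 0 <= x^+2/2 by rewrite divr_ge0 // exprn_ge0.
  lra.
rewrite expRN; apply: le_trans (_ : (1 + x + x^+2/2)^-1 <= _).
  by rewrite lef_pV2 // posrE (lt_le_trans A0).
rewrite -[X in X <= _]div1r ler_pdivrMr //.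
have h4 : 0 <= x ^+ 4 by rewrite exprn_ge0.
have -> : (1 - x + x ^+ 2 / 2) * (1 + x + x ^+ 2 / 2) = 1 + x^+4/4.
  by rewrite !exprS expr0; field.
by rewrite lerDl divr_ge0.
Qed.

Definition cnt (n K : nat) (z : {ffun 'I_n -> 'I_K}) (c : 'I_K) : R :=
  \sum_(i < n) ((z i == c)%:R).

Lemma sum_fiber (n K : nat) (z : {ffun 'I_n -> 'I_K}) (h : 'I_K -> R) :
  \sum_(l < n) h (z l) = \sum_(c < K) cnt z c * h c.
Proof.
rewrite /cnt.
under [RHS]eq_bigr => c _ do rewrite mulr_suml.
rewrite exchange_big /=; apply: eq_bigr => l _.
rewrite (bigD1 (z l)) //= eqxx mul1r big1 ?addr0 // => c hc.
by rewrite eq_sym (negbTE hc) mul0r.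
Qed.

Lemma rho_min_le (K : nat) (r : 'I_K -> R) (c : 'I_K) : rho_min r <= r c.
Proof.
rewrite /rho_min.
set m := \big[mine/+oo%E]_(k < K) (r k)%:E.
have hle : (m <= (r c)%:E)%E.
  by rewrite /m (bigD1 c) //= ge_min lexx.
have hn : m != -oo%E.
  rewrite /m; apply: (big_ind (fun x => x != -oo%E)) => // x y hx hy.
  by case: (leP x y) => _ //; rewrite /Order.min; case: ifP.
have hf : m \is a fin_num.
  rewrite fin_numE hn /=; apply/eqP => hp; move: hle; rewrite hp //.
by rewrite -lee_fin fineK.
Qed.


Section Prob.
Variables (n K : nat) (r : 'I_K -> R).
Hypothesis hr0 : forall k, 0 <= r k.
Hypothesis hr1 : \sum_(k < K) r k = 1.

Definition wt (z : {ffun 'I_n -> 'I_K}) : R := \prod_(i < n) r (z i).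

Lemma wt_ge0 z : 0 <= wt z.
Proof. by apply: prodr_ge0 => i _. Qed.

Lemma wt_total : \sum_z wt z = 1.
Proof.
rewrite /wt -(bigA_distr_bigA (fun (i : 'I_n) (k : 'I_K) => r k)) /=.
rewrite hr1; exact: big1.
Qed.

Lemma tail_bound (c : 'I_K) (m lam : R) : 0 <= lam ->
  \sum_(z | cnt z c <= m) wt z <=
  expR (lam * m) * (1 - r c * (1 - expR (- lam))) ^+ n.
Proof.
move=> hl.
rewrite big_mkcond /=.
apply: (@le_trans _ _ (\sum_z wt z * expR (lam * (m - cnt z c)))).
  apply: ler_sum => z _; case: ifP => h.
  - rewrite -{1}(mulr1 (wt z)) ler_wpM2l ?wt_ge0 //.
    by rewrite -expR0 ler_expR mulr_ge0 // subr_ge0.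
  - by rewrite mulr_ge0 ?wt_ge0 ?expR_ge0.
have E1 z : wt z * expR (lam * (m - cnt z c)) =
   expR (lam * m) * \prod_(i < n) (r (z i) * expR (- lam * (z i == c)%:R)).
  rewrite big_split /= /wt mulrCA; congr (_ * _).
  rewrite mulrBr expRD /cnt mulr_sumr -sumrN expR_sum; congr (_ * _).
  by apply: eq_bigr => i _; rewrite mulNr.
rewrite (eq_bigr _ (fun z _ => E1 z)) -mulr_sumr.
rewrite -(bigA_distr_bigA (fun (i : 'I_n) (k : 'I_K) => r k * expR (- lam * (k == c)%:R))) /=.
have E2 : \sum_(k < K) r k * expR (- lam * (k == c)%:R) = 1 - r c * (1 - expR (- lam)).
  rewrite (bigD1 c) //= eqxx mulr1.
  rewrite (eq_bigr (fun k => r k)); last first.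
    by move=> k hk; rewrite (negbTE hk) mulr0 expR0 mulr1.
  move: hr1; rewrite (bigD1 c) //= => h1.
  have -> : \sum_(i < K | i != c) r i = 1 - r c by rewrite -h1; ring.
  ring.
rewrite E2 prodr_const card_ord //.
Qed.


Lemma r_le1 c : r c <= 1.
Proof.
rewrite -hr1 (bigD1 c) //= lerDl; exact: sumr_ge0.
Qed.

Lemma tail_Ln (c : 'I_K) (rm : R) : 0 < rm -> rm <= r c ->
  \sum_(z | cnt z c <= Emin n rm) wt z <= Ln n rm.
Proof.
move=> hrm hrc.
have hl : 0 <= rm / 2 by rewrite divr_ge0 // ltW.
apply: le_trans (tail_bound c (Emin n rm) hl) _.
set p := r c; set e := expR (- (rm / 2)); set N : R := n%:R.
have p1 : p <= 1 by exact: r_le1.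
have p0 : 0 <= p by exact: hr0.
have e0 : 0 < e by exact: expR_gt0.
have he : e <= 1 - rm / 2 + (rm / 2) ^+ 2 / 2 by exact: expRN_le.
have N0 : 0 <= N by rewrite /N ler0n.
have q0 : 0 <= 1 - p * (1 - e) by nra.
have hq : (1 - p * (1 - e)) ^+ n <= expR (N * - (p * (1 - e))).
  rewrite expRM_natl; apply: lerXn2r; rewrite ?nnegrE ?expR_ge0 //.
  have := expR_ge1Dx (- (p * (1 - e))); lra.
apply: le_trans (ler_wpM2l (expR_ge0 _) hq) _.
rewrite -expRD /Ln.
have key : rm / 2 * rm / 2 - p * (1 - e) <= - (rm ^+ 2 / 8).
  have : p * (1 - e) >= p * (rm / 2 - (rm / 2) ^+ 2 / 2) by rewrite ler_wpM2l //; lra.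
  have h1 : 0 <= (p - rm) * (rm / 2) by rewrite mulr_ge0 // ?subr_ge0.
  have h2 : 0 <= (1 - p) * (rm / 2) ^+ 2 by rewrite mulr_ge0 ?exprn_ge0 // subr_ge0.
  nra.
have d1 : 1 <= 1 + 1 / 3 * (rm / 2) by rewrite lerDl; nra.
have hY : rm / 2 * Emin n rm + N * - (p * (1 - e)) <=
    - (1 / 2 * (rm / 2) ^+ 2 * n%:R / (1 + 1 / 3 * (rm / 2))).
  apply: (@le_trans _ _ (N * - (rm ^+ 2 / 8))).
    rewrite /Emin -/N.
    have -> : rm / 2 * (N * rm / 2) + N * - (p * (1 - e)) = N * (rm / 2 * rm / 2 - p * (1 - e)) by ring.
    exact: ler_wpM2l.
  have hd : 0 < 1 + 1 / 3 * (rm / 2) by lra.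
  have : 1 / 2 * (rm / 2) ^+ 2 * n%:R / (1 + 1 / 3 * (rm / 2)) <= N * (rm ^+ 2 / 8).
    rewrite ler_pdivrMr // -/N.
    have : 0 <= N * rm ^+ 2 by apply: mulr_ge0 => //; apply: exprn_ge0; exact: ltW.
    nra.
  lra.
apply: (@le_trans _ _ (expR (- (1 / 2 * (rm / 2) ^+ 2 * n%:R / (1 + 1 / 3 * (rm / 2)))))).
  by rewrite ler_expR.
have := expR_ge0 (- (1 / 2 * (rm / 2) ^+ 2 * n%:R / (1 + 1 / 3 * (rm / 2)))).
lra.
Qed.

Lemma union_bound (E : pred {ffun 'I_n -> 'I_K}) (m L : R) :
  (forall z, ~~ E z -> exists c, cnt z c <= m) ->
  (forall c, \sum_(z | cnt z c <= m) wt z <= L) ->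
  1 - K%:R * L <= \sum_(z | E z) wt z.
Proof.
move=> hE hL.
have := wt_total; rewrite (bigID E) /= => htot.
have : \sum_(z | ~~ E z) wt z <= K%:R * L.
  apply: (@le_trans _ _ (\sum_(c < K) \sum_(z | cnt z c <= m) wt z)).
    under [X in _ <= X]eq_bigr => c _ do rewrite big_mkcond /=.
    rewrite exchange_big /= [X in X <= _]big_mkcond /=.
    apply: ler_sum => z _; case: ifP => hz; last first.
      by apply: sumr_ge0 => c _; case: ifP => _ //; exact: wt_ge0.
    have [c0 hc0] := hE z hz.
    rewrite (bigD1 c0) //= hc0 lerDl.
    by apply: sumr_ge0 => c _; case: ifP => _ //; exact: wt_ge0.
  apply: le_trans (ler_sum _ (fun c _ => hL c)) _.
  by rewrite sumr_const card_ord mulr_natl.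
lra.
Qed.

End Prob.

Lemma binK (k : nat) : (1 < k)%N -> 'C(k, 2)%:R * k%:R * 2 = (k%:R ^+ 2 * (k%:R - 1) : R).
Proof.
case: k => [|[|k]] // _.
have := bin_ffact k.+2 2; rewrite !ffactnS ffactn0 /= => h.
have h' : ('C(k.+2, 2)%:R * 2 : R) = k.+2%:R * k.+1%:R.
  by move/(congr1 (fun x => x%:R : R)): h; rewrite !natrM /= ?muln1 ?mulr1.
have e2 : (k.+2%:R : R) = k%:R + 2 by rewrite -addn2 natrD.
have e1 : (k.+1%:R : R) = k%:R + 1 by rewrite -addn1 natrD.
rewrite -mulrA [k.+2%:R * 2]mulrC mulrA h' e2 e1; ring.
Qed.

Lemma det_event (n K : nat) (hK : (1 < K)%N) (g : R) (Bm : 'M[R]_K) (rm : R)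
  (z : {ffun 'I_n -> 'I_K}) (hg : 0 < g) (hrm : 0 <= rm)
  (hrows : forall a b : 'I_K, a != b -> row a Bm != row b Bm)
  (hall : forall c, Emin n rm < cnt z c) :
  ((g * Num.sqrt (Emin n rm))%:E * dBstar Bm < dPstar g Bm z)%E.
Proof.
have hE0 : 0 <= Emin n rm by rewrite /Emin divr_ge0 // mulr_ge0.
have hX0 : 0 <= g * Num.sqrt (Emin n rm) by apply: mulr_ge0; [exact: ltW | exact: sqrtr_ge0].
pose D (a b : 'I_K) := \sum_(k < K) (Bm a k - Bm b k) ^+ 2.
have dBle a b : a != b -> (dBstar Bm <= (Num.sqrt (D a b))%:E)%E.
  by move=> hab; rewrite /dBstar (bigD1 (a, b)) //= ge_min lexx.
have hXle a b : a != b -> ((g * Num.sqrt (Emin n rm))%:E * dBstar Bm <=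
    (g * Num.sqrt (Emin n rm) * Num.sqrt (D a b))%:E)%E.
  by move=> hab; rewrite [X in (_ <= X)%E]EFinM lee_wpmul2l ?lee_fin ?dBle.
rewrite /dPstar.
set X := ((g * Num.sqrt (Emin n rm))%:E * dBstar Bm)%E.
apply: (big_ind (fun y => (X < y)%E)).
- pose a0 : 'I_K := Ordinal (ltn_trans (ltnSn 0) hK).
  pose a1 : 'I_K := Ordinal hK.
  apply: le_lt_trans (hXle a0 a1 _) _; first by [].
  by rewrite ltey.
- by move=> x y hx hy; rewrite lt_min hx hy.
move=> [i j] /= hij.
set a := z i; set b := z j.
apply: le_lt_trans (hXle a b hij) _; rewrite lte_fin /rowdistP /Pmat.
set S := \sum_(c < K) cnt z c * (Bm a c - Bm b c) ^+ 2.
have hS : \sum_(l < n) (g * Bm a (z l) - g * Bm b (z l)) ^+ 2 = g ^+ 2 * S.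
  transitivity (\sum_(l < n) g ^+ 2 * (Bm a (z l) - Bm b (z l)) ^+ 2).
    by apply: eq_bigr => l _; ring.
  by rewrite -mulr_sumr (sum_fiber z (fun c => (Bm a c - Bm b c) ^+ 2)).
have [k hk] : exists k, Bm a k != Bm b k.
  case: (boolP [exists k, Bm a k != Bm b k]) => [/existsP//|/existsPn H].
  exfalso; move/negP: (hrows a b hij); apply; apply/eqP/rowP => k.
  by rewrite !mxE; apply/eqP; move: (H k); rewrite negbK.
have hdiff : S - Emin n rm * D a b =
    \sum_(c < K) (cnt z c - Emin n rm) * (Bm a c - Bm b c) ^+ 2.
  by rewrite /D mulr_sumr -sumrB; apply: eq_bigr => c _; ring.
have hpos : 0 < S - Emin n rm * D a b.
  rewrite hdiff (bigD1 k) //=.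
  have t1 : 0 < (cnt z k - Emin n rm) * (Bm a k - Bm b k) ^+ 2.
    rewrite mulr_gt0 // ?subr_gt0 //.
    by rewrite lt_def sqr_ge0 andbT sqrf_eq0 subr_eq0.
  have t2 : 0 <= \sum_(c < K | c != k) (cnt z c - Emin n rm) * (Bm a c - Bm b c) ^+ 2.
    by apply: sumr_ge0 => c _; rewrite mulr_ge0 ?sqr_ge0 // subr_ge0 ltW.
  lra.
have hD0 : 0 <= D a b by apply: sumr_ge0 => c _; exact: sqr_ge0.
have hS0 : 0 < S by have := mulr_ge0 hE0 hD0; lra.
rewrite hS (sqrtrM S (sqr_ge0 g)) sqrtr_sqr gtr0_norm // -mulrA ltr_pM2l //.
rewrite -(sqrtrM (D a b) hE0) ltr_sqrt //; lra.
Qed.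

End Helpers.

Theorem lemma8 (R : realType) (K : nat -> nat)
  (rho : forall n : nat, 'I_(K n) -> R)
  (B : forall n : nat, 'M[R]_(K n))
  (gamma : nat -> R)
  (hK : forall n, (2 <= K n)%N)
  (hrho_ge0 : forall n k, 0 <= rho n k)
  (hrho_sum : forall n, \sum_(k < K n) rho n k = 1)
  (hrho_min : forall n, 0 < rho_min (rho n))
  (hB01 : forall n a b, 0 <= B n a b <= 1)
  (hBrows : forall n (a b : 'I_(K n)), a != b -> row a (B n) != row b (B n))
  (hgamma : forall n, 0 < gamma n <= 1) :
  (forall n : nat,
     label_prob (rho n)
       (fun z : {ffun 'I_n -> 'I_(K n)} =>
          ((gamma n * Num.sqrt (Emin n (rho_min (rho n))))%:E * dBstar (B n)
             < dPstar (gamma n) (B n) z)%E)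
     >= lower_bound n (K n) (rho_min (rho n)))
  /\
  ((fun n : nat =>
      n%:R * rho_min (rho n) ^+ 2 / (8 * (1 + rho_min (rho n) / 6))
      - ln ((K n)%:R ^+ 2 * ((K n)%:R - 1))) @ \oo --> +oo ->
   (fun n : nat => lower_bound n (K n) (rho_min (rho n))) @ \oo --> (1 : R)).
Proof.
split.
- move=> n.
  have hrm := hrho_min n.
  rewrite /label_prob.
  apply: le_trans; last first.
    apply: (union_bound (hrho_ge0 n) (hrho_sum n) (m := Emin n (rho_min (rho n)))
                        (L := Ln n (rho_min (rho n)))).
    + move=> z hz.
      case: (boolP [exists c, @cnt R _ _ z c <= Emin n (rho_min (rho n))]) => [/existsP//|/existsPn H].
      exfalso; move/negP: hz; apply.
      apply: det_event; [exact: hK | by case/andP: (hgamma n) | exact: ltW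
                        | exact: hBrows | move=> c; rewrite ltNge; exact: H].
    + move=> c; apply: (@tail_Ln R n _ _ (hrho_ge0 n) (hrho_sum n)) => //; exact: rho_min_le.
  rewrite /lower_bound lerD2l lerN2.
  have hL0 : 0 <= Ln n (rho_min (rho n)) by rewrite /Ln mulr_ge0 ?expR_ge0.
  have hC : 1 <= ('C(K n, 2)%:R : R).
    by rewrite ler1n bin_gt0 hK.
  rewrite -mulrA ler_pMl ?mulr_ge0 //.
  apply: mulr_gt0; first by rewrite ltr0n (ltn_trans _ (hK n)).
  by rewrite /Ln mulr_gt0 ?expR_gt0.
- move=> hf.
  have heq : (fun n => lower_bound n (K n) (rho_min (rho n))) =
    (fun n => 1 - expR (- (n%:R * rho_min (rho n) ^+ 2 / (8 * (1 + rho_min (rho n) / 6))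
      - ln ((K n)%:R ^+ 2 * ((K n)%:R - 1))))).
    apply/funext => n; rewrite /lower_bound /Ln; congr (_ - _).
    have hrm := hrho_min n.
    set rm := rho_min (rho n).
    have hk : (1 < (K n)%:R :> R) by rewrite ltr1n hK.
    have hQ : 0 < (K n)%:R ^+ 2 * ((K n)%:R - 1) :> R.
      by apply: mulr_gt0; [apply: exprn_gt0 | rewrite subr_gt0]; lra.
    rewrite opprB expRD lnK ?posrE //.
    have -> : 1 / 2 * (rm / 2) ^+ 2 * n%:R / (1 + 1 / 3 * (rm / 2)) =
              n%:R * rm ^+ 2 / (8 * (1 + rm / 6)).
      by field; rewrite gt_eqF // addr_gt0.
    rewrite -(@binK R _ (hK n)); ring.
  rewrite heq -[X in _ --> X](subr0 (1:R)).
  apply: cvgB; first exact: cvg_cst.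
  exact: (cvg_comp _ _ hf (@cvgr_expR R)).
Qed.
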